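(* Let $0\le\beta_1\le\dots\le\beta_n$ be reals and $\ell\in\{1,\dots,n\}$. Then: 1. For each integer $d\ge0$ there is an $(\ell,\frac{2d}{\ell})$-set $I$ with $|I|=2d$. 2. For each integer $h$ with $0\le h\le\frac{\ell+1}{2}$ there is an $(\ell,1-\frac{2h}{\ell(\ell+1)})$-set $I$ with $\ell-1\le|I|\le\ell$. 3. For each integer $k\ge1$ and each $h\in\{0,1,\dots,\ell\}$ there is an $(\ell,k+\frac{2h}{\ell(\ell+1)})$-set $I$ with $k\ell+\lfloor\frac{2h}{\ell+1}\rfloor\le|I|\le k\ell+\lceil\frac{2h}{\ell+1}\rceil$. 4. For each integer $d\ge1$ and each $h\in\{0,1,\dots,\ell\}$ there is an $(\ell,\frac{2d}{\ell}+\frac{2h}{\ell(\ell+1)})$-set $I$ with $|I|\le 2d+2$. 5. If $\ell\le n-1$, then for each integer $d\ge0$ there is an $\ell$-set $I$ with $|I|=2d$, $\Sigma(I)\ge\ell d$, and $\sigma(I,\ell)\le\frac{2d\,t_{\ell+1}}{\ell+1}$.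
   Context: Set $\beta_0=0$. For $\ell=1,\dots,n$, let $t_\ell=\sum_{i=1}^{\ell}\beta_{n-\ell+i}$, the sum of the $\ell$ largest $\beta_i$. An $\ell$-set is a finite multiset of elements of $\{0,1,\dots,\ell\}$. For a multiset $I$, $|I|$ is its cardinality and $\Sigma(I)$ the sum of its elements, both counting multiplicity. For an $\ell$-set $I$, $\sigma(I,\ell)=\sum_{i\in I}\beta_{n-\ell+i}$, counting multiplicity. For a real $q>0$, an $(\ell,q)$-set is an $\ell$-set $I$ with $\Sigma(I)\ge\frac{q\ell(\ell+1)}2$ and $\sigma(I,\ell)\le q\,t_\ell$. *)

(* Defs.v *)
From HB Require Import structures.
From mathcomp Require Import all_boot all_order all_algebra.
Set Implicit Arguments. Unset Strict Implicit. Unset Printing Implicit Defensive.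
Import Order.TTheory GRing.Theory Num.Theory.
Local Open Scope ring_scope.

(* beta : nat -> R gives beta_1, ..., beta_n (values at other indices are
   ignored); the convention beta_0 = 0 is built into [betaz]. *)
Definition betaz (R : realFieldType) (beta : nat -> R) (i : nat) : R :=
  if i == 0%N then 0 else beta i.

Definition tsum (R : realFieldType) (beta : nat -> R) (n l : nat) : R :=
  \sum_(1 <= i < l.+1) betaz beta (n - l + i)%N.

(* an l-set: a finite multiset of elements of {0,...,l}, represented by a
   sequence (order irrelevant, multiplicities counted) *)
Definition lset (l : nat) (I : seq nat) : bool := all (fun i => i <= l)%N I.

(* Sigma(I) = sumn I ; |I| = size I *)
Definition sigmaI (R : realFieldType) (beta : nat -> R) (n l : nat)
  (I : seq nat) : R := \sum_(i <- I) betaz beta (n - l + i)%N.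

Definition lqset (R : realFieldType) (beta : nat -> R) (n l : nat) (q : R)
  (I : seq nat) : Prop :=
  [/\ lset l I,
      q * (l * (l + 1))%:R / 2 <= (sumn I)%:R
    & sigmaI beta n l I <= q * tsum beta n l].

(* Main.v *)
Require Import Defs.
From HB Require Import structures.
From mathcomp Require Import all_boot all_order all_algebra.
From mathcomp.zify Require Import zify.
From mathcomp.algebra_tactics Require Import ring lra.
Import Order.TTheory GRing.Theory Num.Theory.
Local Open Scope ring_scope.
Set Implicit Arguments. Unset Strict Implicit. Unset Printing Implicit Defensive.
Definition sig (R : realFieldType) (c : nat -> R) (I : seq nat) : R :=
  \sum_(i <- I) c i.
Definition Pc (R : realFieldType) (c : nat -> R) (m : nat) : R :=
  \sum_(1 <= i < m.+1) c i.

Lemma tri_step (R : realFieldType) (g c : nat -> R) h :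
  \sum_(1 <= x < h.+2) g x * Pc c (h.+1 - x)%N =
  \sum_(1 <= x < h.+1) g x * Pc c (h - x)%N + \sum_(1 <= x < h.+1) g x * c (h.+1 - x)%N.
Proof.
rewrite big_nat_recr //= subnn /Pc [X in _ * X]big_geq // mulr0 addr0 -big_split /=.
apply: eq_big_nat => x /andP[x1 xh].
rewrite subSn; last by lia.
by rewrite big_nat_recr //= mulrDr.
Qed.

Lemma tri_sym (R : realFieldType) (g c : nat -> R) h :
  \sum_(1 <= x < h.+1) g x * Pc c (h - x)%N =
  \sum_(1 <= x < h.+1) c x * Pc g (h - x)%N.
Proof.
elim: h => [|h IH]; first by rewrite !big_geq.
rewrite !tri_step IH; congr (_ + _).
rewrite big_nat_rev /=; apply: eq_big_nat => x /andP[x1 xh].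
rewrite mulrC; congr (c _ * g _); lia.
Qed.

Lemma pairsum (R : realFieldType) (c : nat -> R) l a : (1 <= a <= l.+1)%N ->
  \sum_(a <= i < l.+1) (c i + c (l + a - i)%N) = 2 * (Pc c l - Pc c a.-1).
Proof.
move=> /andP[a1 al]; rewrite big_split /=.
have -> : \sum_(a <= i < l.+1) c (l + a - i)%N = \sum_(a <= i < l.+1) c i.
  rewrite big_nat_rev /=; apply: eq_big_nat => i /andP[ia il]; congr (c _); lia.
rewrite /Pc (big_cat_nat _ (m := 1) (n := a)) //= prednK //.
ring.
Qed.

Lemma sum_lin (R : realFieldType) (a b : R) m :
  \sum_(1 <= x < m.+1) (a - b * x%:R) = m%:R * a - b * (m%:R * (m%:R + 1) / 2).
Proof.
elim: m => [|m IH]; first by rewrite big_geq //; ring.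
rewrite big_nat_recr //= IH -[m.+1]addn1 natrD; by field.
Qed.

Definition wx (R : realFieldType) (l h x : nat) : R := 2 * ((l.+1 + h)%:R - 3 * x%:R).
Definition wp (R : realFieldType) (l h : nat) : R := l%:R * (l%:R + 1 - 2 * h%:R).

Lemma IdA (R : realFieldType) (c : nat -> R) l h : (h <= l)%N ->
  \sum_(1 <= x < h.+1) wx R l h x *
     \sum_((h.+1 - x)%N <= i < l.+1) (c x + c i + c (l.+1 + h - x - i)%N)
  + wp R l h * \sum_(h.+1 <= i < l.+1) (c i + c (l.+1 + h - i)%N)
  = 2 * (l.+1 + h)%:R * (l%:R - h%:R) * Pc c l.
Proof.
move=> hl.
have E1 : forall x, (1 <= x < h.+1)%N ->
   wx R l h x * \sum_((h.+1 - x)%N <= i < l.+1) (c x + c i + c (l.+1 + h - x - i)%N)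
   = wx R l h x * ((l - h + x)%N%:R * c x) + 2 * Pc c l * wx R l h x
     - 2 * (wx R l h x * Pc c (h - x)%N).
  move=> x /andP[x1 xh].
  under eq_big_nat => i Hi do rewrite -addrA.
  rewrite big_split /= sumr_const_nat.
  have -> : \sum_((h.+1 - x)%N <= i < l.+1) (c i + c (l.+1 + h - x - i)%N)
       = \sum_((h.+1 - x)%N <= i < l.+1) (c i + c (l + (h.+1 - x) - i)%N).
    apply: eq_big_nat => i Hi; congr (_ + c _); lia.
  rewrite pairsum; last by lia.
  have -> : (l.+1 - (h.+1 - x))%N = (l - h + x)%N by lia.
  have -> : (h.+1 - x).-1 = (h - x)%N by lia.
  rewrite -mulr_natl; ring.
have E2 : \sum_(h.+1 <= i < l.+1) (c i + c (l.+1 + h - i)%N) = 2 * (Pc c l - Pc c h).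
  have -> : \sum_(h.+1 <= i < l.+1) (c i + c (l.+1 + h - i)%N)
       = \sum_(h.+1 <= i < l.+1) (c i + c (l + h.+1 - i)%N).
    apply: eq_big_nat => i Hi; congr (_ + c _); lia.
  by rewrite pairsum //; lia.
rewrite (eq_big_nat _ _ E1) E2 sumrB big_split /=.
have W : \sum_(1 <= x < h.+1) wx R l h x =
    2 * (h%:R * (l.+1 + h)%:R - 3 * (h%:R * (h%:R + 1) / 2)).
  by rewrite -mulr_sumr /wx sum_lin.
have T2 : \sum_(1 <= x < h.+1) 2 * Pc c l * wx R l h x =
    2 * Pc c l * (2 * (h%:R * (l.+1 + h)%:R - 3 * (h%:R * (h%:R + 1) / 2))).
  by rewrite -mulr_sumr W.
have T3 : \sum_(1 <= x < h.+1) 2 * (wx R l h x * Pc c (h - x)%N) =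
    2 * \sum_(1 <= x < h.+1) c x * Pc (wx R l h) (h - x)%N.
  by rewrite -mulr_sumr tri_sym.
have H1 : \sum_(1 <= x < h.+1) wx R l h x * ((l - h + x)%N%:R * c x)
   = 2 * \sum_(1 <= x < h.+1) c x * Pc (wx R l h) (h - x)%N
     + 2 * wp R l h * Pc c h.
  rewrite /Pc mulr_sumr mulr_sumr -big_split /=.
  apply: eq_big_nat => x /andP[x1 xh].
  rewrite -mulr_sumr /wx sum_lin /wp !natrB; try lia.
  rewrite !natrD (natrB _ hl) -!natr1; by field.
rewrite H1 T3 -(mulr_sumr _ _ _ (2 * Pc c l)) W /wp !natrD -!natr1; by field.
Qed.

Lemma nzS (R : realFieldType) l : (1 + l%:R : R) != 0.
Proof. by rewrite addrC natr1 pnatr_eq0. Qed.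

Lemma eqle (R : realFieldType) (x y : R) : x = y -> x <= y.
Proof. by move->. Qed.

Lemma avg_min (R : realFieldType) (T : eqType) (s : seq T) (w v : T -> R) (B : R) :
  (forall t, t \in s -> 0 <= w t) -> 0 < \sum_(t <- s) w t ->
  \sum_(t <- s) w t * v t <= (\sum_(t <- s) w t) * B ->
  exists t, [/\ t \in s, 0 < w t & v t <= B].
Proof.
move=> w0 Wpos Hle.
case: (boolP (has (fun t => (0 < w t) && (v t <= B)) s)) => [/hasP[t ts /andP[h1 h2]]|nb].
  by exists t.
exfalso.
have hasw : has (fun t => 0 < w t) s.
  apply/negPn/negP => /hasPn H.
  have : \sum_(t <- s) w t <= 0.
    rewrite big_seq; apply: sumr_le0 => t ts.
    by rewrite leNgt; apply: H.
  by rewrite leNgt Wpos.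
have E : forall F : T -> R, \sum_(t <- s) w t * F t = \sum_(t <- s | 0 < w t) w t * F t.
  move=> F; rewrite [RHS]big_mkcond /= !big_seq; apply: eq_bigr => t ts.
  case: ifP => // /negbT; have := w0 t ts; rewrite le_eqVlt; case/orP=> [/eqP<-|->] //.
  by rewrite mul0r.
have : \sum_(t <- s | 0 < w t) w t * B < \sum_(t <- s | 0 < w t) w t * v t.
  rewrite big_seq_cond [X in _ < X]big_seq_cond; apply: ltr_sum.
    by move: hasw => /hasP[t ts wt]; apply/hasP; exists t => //; rewrite ts wt.
  move=> t /andP[ts wt]; rewrite ltr_pM2l //.
  move/hasPn: nb => /(_ t ts); rewrite wt /= -ltNge; done.
by rewrite -!E -mulr_suml ltNge Hle.
Qed.

Lemma sig3 (R : realFieldType) (c : nat -> R) x i j : sig c [:: x; i; j] = c x + c i + c j.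
Proof. by rewrite /sig !big_cons big_nil addr0 addrA. Qed.
Lemma sig2 (R : realFieldType) (c : nat -> R) x i : sig c [:: x; i] = c x + c i.
Proof. by rewrite /sig !big_cons big_nil addr0. Qed.
Lemma sig_cat (R : realFieldType) (c : nat -> R) I J : sig c (I ++ J) = sig c I + sig c J.
Proof. by rewrite /sig big_cat. Qed.

Lemma Pc_id (R : realFieldType) l : Pc (fun i => i%:R : R) l = l%:R * (l%:R + 1) / 2.
Proof.
have := sum_lin (0 : R) (-1) l.
rewrite /Pc => E; rewrite (eq_bigr (fun x => 0 - (-1) * x%:R)); first by rewrite E; ring.
by move=> i _; ring.
Qed.

Definition Afam (R : realFieldType) (l h : nat) : seq (R * seq nat) :=
  flatten [seq [seq (wx R l h x, [:: x; i; (l.+1 + h - x - i)%N])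
                   | i <- index_iota (h.+1 - x) l.+1] | x <- index_iota 1 h.+1]
  ++ [seq (wp R l h, [:: i; (l.+1 + h - i)%N]) | i <- index_iota h.+1 l.+1].

Lemma Afam_mem (R : realFieldType) l h t : t \in Afam R l h ->
  (exists x i, [/\ t = (wx R l h x, [:: x; i; (l.+1 + h - x - i)%N]), (1 <= x <= h)%N
       & (h.+1 - x <= i <= l)%N])
  \/ (exists i, t = (wp R l h, [:: i; (l.+1 + h - i)%N]) /\ (h < i <= l)%N).
Proof.
rewrite mem_cat => /orP[/flattenP[r /mapP[x xin ->] /mapP[i iin ->]] | /mapP[i iin ->]].
  left; exists x, i; move: xin iin; rewrite !mem_index_iota; split => //; lia.
by right; exists i; move: iin; rewrite mem_index_iota; split => //; lia.
Qed.

Lemma Afam_sum (R : realFieldType) l h (F : seq nat -> R) :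
  \sum_(t <- Afam R l h) t.1 * F t.2 =
  \sum_(1 <= x < h.+1) wx R l h x *
     \sum_((h.+1 - x)%N <= i < l.+1) F [:: x; i; (l.+1 + h - x - i)%N]
  + wp R l h * \sum_(h.+1 <= i < l.+1) F [:: i; (l.+1 + h - i)%N].
Proof.
rewrite big_cat big_flatten /= big_map; congr (_ + _).
  by apply: eq_bigr => x _; rewrite big_map mulr_sumr.
by rewrite big_map mulr_sumr.
Qed.

Lemma Afam_val (R : realFieldType) (c : nat -> R) l h : (h <= l)%N ->
  \sum_(t <- Afam R l h) t.1 * sig c t.2 = 2 * (l.+1 + h)%:R * (l%:R - h%:R) * Pc c l.
Proof.
move=> hl; rewrite Afam_sum -IdA //; congr (_ + _).
  by apply: eq_bigr => x _; congr (_ * _); apply: eq_bigr => i _; rewrite sig3.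
by congr (_ * _); apply: eq_bigr => i _; rewrite sig2.
Qed.

Lemma Afam_wsum (R : realFieldType) l h : (h <= l)%N ->
  \sum_(t <- Afam R l h) t.1 = (l%:R - h%:R) * l%:R * (l%:R + 1).
Proof.
move=> hl.
have E := Afam_val (fun i => i%:R : R) hl.
have E2 : \sum_(t <- Afam R l h) t.1 * sig (fun i => i%:R : R) t.2
        = \sum_(t <- Afam R l h) t.1 * (l.+1 + h)%:R.
  rewrite big_seq [RHS]big_seq; apply: eq_bigr => t /Afam_mem.
  case=> [[x [i [-> xr ir]]] | [i [-> ir]]] /=; [rewrite sig3 | rewrite sig2];
   rewrite -!natrD; congr (_ * _%:R); lia.
rewrite E2 -mulr_suml Pc_id in E.
have N0 : (l.+1 + h)%:R != 0 :> R by rewrite pnatr_eq0 addSn.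
apply: (mulIf N0); rewrite E; by field.
Qed.

Lemma Afam_w0 (R : realFieldType) l h t : (2 * h <= l.+1)%N -> t \in Afam R l h -> 0 <= t.1.
Proof.
move=> h2 /Afam_mem [[x [i [-> xr ir]]] | [i [-> ir]]] /=.
  rewrite /wx pmulr_rge0 // subr_ge0 -natrM ler_nat; lia.
rewrite /wp mulr_ge0 // -natrM.
have -> : (l%:R + 1 - (2 * h)%:R : R) = (l.+1 - 2 * h)%N%:R by rewrite natrB // -natr1.
by [].
Qed.

Lemma exA (R : realFieldType) (c : nat -> R) l h : (2 * h <= l.+1)%N -> (h < l)%N ->
  exists I, [/\ lset l I, sumn I = (l.+1 + h)%N,
     (l * l.+1)%:R * sig c I <= (2 * (l.+1 + h))%:R * Pc c l
   & ((size I == 3) && (0 < h)%N) || ((size I == 2) && (2 * h < l.+1)%N)].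
Proof.
move=> h2 hl.
have hl' : (h <= l)%N by lia.
have L0 : 0 < (l * l.+1)%:R :> R by rewrite ltr0n; lia.
have Wp : 0 < \sum_(t <- Afam R l h) t.1.
  rewrite Afam_wsum // -natrB 1?ltnW // natr1 -!natrM ltr0n !muln_gt0; lia.
have Hle : \sum_(t <- Afam R l h) t.1 * sig c t.2 <=
   (\sum_(t <- Afam R l h) t.1) * (2 * (l.+1 + h)%:R / (l * l.+1)%:R * Pc c l).
  rewrite Afam_val // Afam_wsum // natrM; apply: eqle.
  by field; rewrite nzS /= pnatr_eq0; lia.
have [t [ts tpos tle]] := avg_min (fun t => @Afam_w0 R l h t h2) Wp Hle.
exists t.2.
have tle' : (l * l.+1)%:R * sig c t.2 <= (2 * (l.+1 + h))%:R * Pc c l.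
  rewrite -ler_pdivlMl // natrM; apply: (le_trans tle); apply: eqle.
  by field; rewrite nzS /= pnatr_eq0; lia.
case/Afam_mem: ts tpos tle' => [[x [i [-> xr ir]]] | [i [-> ir]]] /= tpos tle'.
  split => //=; lia.
split => //=; try lia.
move: tpos; rewrite /wp; case: (ltnP (2 * h) l.+1) => // h3.
have E : (2 * h)%N = l.+1 by lia.
have -> : (l%:R + 1 - 2 * h%:R : R) = 0 by rewrite natr1 -E natrM; ring.
by rewrite mulr0 ltxx.
Qed.


Definition good (R : realFieldType) (c : nat -> R) (l M : nat) (I : seq nat) : Prop :=
  [/\ lset l I, (sumn I).*2 = M & (l * l.+1)%:R * sig c I <= M%:R * Pc c l].

Lemma exP (R : realFieldType) (c : nat -> R) l : (0 < l)%N ->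
  exists p, good c l (2 * l.+1) p /\ size p = 2%N.
Proof.
move=> l0; have [I [H1 H2 H3 H4]] := exA c (h := 0) (l := l) (isT : (2 * 0 <= l.+1)%N) l0.
exists I; split; last by move: H4; rewrite andbF /= => /andP[/eqP].
by split => //; [rewrite H2 addn0 -mul2n | rewrite addn0 in H3].
Qed.

Definition refl (l : nat) (I : seq nat) : seq nat := [seq (l.+1 - x)%N | x <- I].

Lemma sig_refl (R : realFieldType) (c : nat -> R) l I :
  sig c (refl l I) = sig (fun x => c (l.+1 - x)%N) I.
Proof. by rewrite /sig big_map. Qed.

Lemma Pc_refl (R : realFieldType) (c : nat -> R) l :
  Pc (fun x => c (l.+1 - x)%N) l = Pc c l.
Proof.
rewrite /Pc big_nat_rev /=; apply: eq_big_nat => i /andP[i1 il]; congr (c _); lia.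
Qed.

Lemma exC (R : realFieldType) (c : nat -> R) l h : (2 * h <= l.+1)%N -> (h < l)%N ->
  exists I, [/\ good c l (2 * (2 * l.+1 - h)) I
   & ((size I == 3) && (0 < h)%N) || ((size I == 4) && (2 * h < l.+1)%N)].
Proof.
move=> h2 hl.
have hl' : (h <= l)%N by lia.
have l0 : (0 < l)%N by lia.
have L0 : 0 < (l * l.+1)%:R :> R by rewrite ltr0n; lia.
have [p0 [[p0l p0s p0g] p0z]] := exP c l0.
have p0g' : l%:R * sig c p0 <= 2 * Pc c l.
  rewrite -(ler_pM2l (_ : 0 < l.+1%:R :> R)) ?ltr0n //.
  by move: p0g; rewrite natrM mulrC mulrA (mulrC l%:R) natrM; lra.
pose F (M : seq nat) := if size M == 3 then refl l M else refl l M ++ p0.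
pose s := [seq (t.1, F t.2) | t <- Afam R l h].
have Ws : \sum_(t <- s) t.1 = (l%:R - h%:R) * l%:R * (l%:R + 1).
  by rewrite big_map /= Afam_wsum.
have w0 : forall t, t \in s -> 0 <= t.1.
  by move=> t /mapP[u us ->] /=; apply: Afam_w0 us.
have Wp : 0 < \sum_(t <- s) t.1.
  rewrite Ws -natrB 1?ltnW // natr1 -!natrM ltr0n !muln_gt0; lia.
have Hval : \sum_(t <- s) t.1 * sig c t.2 =
   2 * (l.+1 + h)%:R * (l%:R - h%:R) * Pc c l
   + wp R l h * ((l - h)%N%:R * sig c p0).
  have Fsig : forall M, sig c (F M) = sig (fun x => c (l.+1 - x)%N) M
      + (if size M == 3 then 0 else sig c p0).
    by move=> M; rewrite /F; case: ifP => _; rewrite ?sig_cat sig_refl ?addr0.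
  rewrite big_map /=.
  under eq_bigr => t _ do rewrite Fsig mulrDr.
  rewrite big_split /= Afam_val // Pc_refl; congr (_ + _).
  rewrite (Afam_sum l h (fun M => if size M == 3 then 0 else sig c p0)) /= big1 ?mulr0 ?add0r; last first.
    by move=> x _; rewrite big1 ?mulr0.
  by rewrite sumr_const_nat subSS mulr_natl.
have Hle : \sum_(t <- s) t.1 * sig c t.2 <=
   (\sum_(t <- s) t.1) * (2 * (2 * l.+1 - h)%N%:R / (l * l.+1)%:R * Pc c l).
  rewrite Hval Ws.
  have k0 : 0 <= (l%:R + 1 - 2 * h%:R) * (l%:R - h%:R) :> R.
    have -> : (l%:R + 1 - 2 * h%:R : R) = (l.+1 - 2 * h)%N%:R by rewrite natrB ?natrM -?natr1 //; lia.
    by rewrite -natrB // -natrM ler0n.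
  have K := ler_wpM2l k0 p0g'.
  apply: (le_trans (y := 2 * (l.+1 + h)%:R * (l%:R - h%:R) * Pc c l
      + (l%:R + 1 - 2 * h%:R) * (l%:R - h%:R) * (2 * Pc c l))).
    rewrite lerD2l; move: K; rewrite /wp natrB //.
    by rewrite (_ : l%:R * (l%:R + 1 - 2 * h%:R) * ((l%:R - h%:R) * sig c p0) = (l%:R + 1 - 2 * h%:R) * (l%:R - h%:R) * (l%:R * sig c p0)) //; ring.
  apply: eqle; rewrite natrB; last by lia.
  rewrite natrM -!natr1 !natrD; by field; rewrite nzS /= pnatr_eq0; lia.
have [t [ts tpos tle]] := avg_min w0 Wp Hle.
exists t.2.
have tle' : (l * l.+1)%:R * sig c t.2 <= (2 * (2 * l.+1 - h))%:R * Pc c l.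
  rewrite -ler_pdivlMl // natrM; apply: (le_trans tle); apply: eqle.
  by field; rewrite nzS /= pnatr_eq0; lia.
case/mapP: ts tpos tle' => u /Afam_mem [[x [i [-> xr ir]]] | [i [-> ir]]] -> /= tpos tle'.
  by rewrite /F /=; split; [split => //=; lia | lia].
rewrite /F /= p0z; split.
  split => //=; first by rewrite p0l andbT; lia.
  by move: p0s; rewrite -!mul2n; lia.
move: tpos; rewrite /wp /=; case: (ltnP (2 * h) l.+1) => // h3.
have E : (2 * h)%N = l.+1 by lia.
have -> : (l%:R + 1 - 2 * h%:R : R) = 0 by rewrite natr1 -E natrM; ring.
by rewrite mulr0 ltxx.
Qed.



Definition rep (d : nat) (p : seq nat) : seq nat := flatten (nseq d p).

Lemma good_cat (R : realFieldType) (c : nat -> R) l M1 M2 I1 I2 :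
  good c l M1 I1 -> good c l M2 I2 -> good c l (M1 + M2) (I1 ++ I2).
Proof.
move=> [a1 b1 c1] [a2 b2 c2]; split.
- by rewrite /lset all_cat; apply/andP.
- by rewrite sumn_cat doubleD b1 b2.
- by rewrite sig_cat mulrDr natrD mulrDl lerD.
Qed.

Lemma good_rep (R : realFieldType) (c : nat -> R) l M p d :
  good c l M p -> good c l (d * M) (rep d p).
Proof.
move=> gp; elim: d => [|d IH].
  by rewrite /rep /=; split => //=; rewrite /sig big_nil mulr0 mul0r.
by rewrite mulSn; apply: good_cat.
Qed.

Lemma size_rep d p : size (rep d p) = (d * size p)%N.
Proof. by elim: d => [|d IH] //=; rewrite size_cat IH mulSn. Qed.

Lemma sumn_iota l : (sumn (iota 1 l)).*2 = (l * l.+1)%N.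
Proof.
have H : forall m, (sumn (iota m.+1 l)).*2 = (l * (l + m.*2).+1)%N.
  elim: l => [|l IH] m //=.
  rewrite doubleD IH; lia.
by rewrite H double0 addn0.
Qed.

Lemma goodF (R : realFieldType) (c : nat -> R) l : good c l (l * l.+1) (iota 1 l).
Proof.
split.
- by apply/allP => x; rewrite mem_iota; lia.
- exact: sumn_iota.
- by rewrite /sig /Pc /index_iota subSS subn0.
Qed.

Lemma good_nil (R : realFieldType) (c : nat -> R) l : good c l 0 [::].
Proof. by split => //=; rewrite /sig big_nil mulr0 mul0r. Qed.

Lemma exB (R : realFieldType) (c : nat -> R) l h : (0 < l)%N -> (2 * h <= l.+1)%N ->
  exists I, good c l (l * l.+1 - 2 * h) I /\ (l - 1 <= size I <= l)%N.
Proof.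
move=> l0 h2.
case: (posnP h) => [->|hp].
  by exists (iota 1 l); rewrite muln0 subn0 size_iota; split; [exact: goodF | lia].
case: (ltnP l 3) => l3.
  have [->|->] : l = 1%N \/ l = 2%N by lia.
    have -> : h = 1%N by lia.
    by exists [::]; split => //; exact: good_nil.
  have -> : h = 1%N by lia.
  case: (lerP (c 2) (2 * c 1)) => hc.
    exists [:: 2%N]; split => //; split => //=.
    rewrite /sig /Pc /index_iota /= !big_cons !big_nil; rewrite (_ : (2 * 3 = 6)%N) // (_ : (2 * 3 - 2 * 1 = 4)%N) //; lra.
  exists [:: 1%N; 1%N]; split => //; split => //=.
  rewrite /sig /Pc /index_iota /= !big_cons !big_nil; rewrite (_ : (2 * 3 = 6)%N) // (_ : (2 * 3 - 2 * 1 = 4)%N) //; lra.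
have [j [Ej|Ej]] : exists j, l = (2 * j)%N \/ l = (2 * j).+1.
  by exists l./2; move: (odd_double_half l); rewrite -mul2n; case: (odd l) => /= E; [right|left]; lia.
- have [p [gp sp]] := exP c l0.
  have hl : (h < l)%N by lia.
  have [I [gI sI]] := exC c h2 hl.
  exists (rep (j - 2) p ++ I); split.
    have -> : (l * l.+1 - 2 * h = (j - 2) * (2 * l.+1) + 2 * (2 * l.+1 - h))%N by subst l; nia.
    exact: good_cat (good_rep _ gp) gI.
  by rewrite size_cat size_rep sp; move: sI; case/orP => /andP[/eqP -> _]; lia.
- have [p [gp sp]] := exP c l0.
  have h2' : (2 * (j.+1 - h) <= l.+1)%N by lia.
  have hl' : (j.+1 - h < l)%N by lia.
  have [I [gI1 gI2 gI3 sI]] := exA c h2' hl'.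
  have gI : good c l (2 * (l.+1 + (j.+1 - h))) I by split => //; rewrite gI2 -mul2n.
  exists (rep (j - 1) p ++ I); split.
    have -> : (l * l.+1 - 2 * h = (j - 1) * (2 * l.+1) + 2 * (l.+1 + (j.+1 - h)))%N by subst l; nia.
    exact: good_cat (good_rep _ gp) gI.
  by rewrite size_cat size_rep sp; move: sI; case/orP => /andP[/eqP -> _]; lia.
Qed.

Lemma sig_rep (R : realFieldType) (c : nat -> R) d p : sig c (rep d p) = d%:R * sig c p.
Proof.
elim: d => [|d IH]; first by rewrite /rep /sig /= big_nil mul0r.
by rewrite /rep /= sig_cat -/(rep d p) IH -natr1; ring.
Qed.

Lemma div_range x d k : (0 < d)%N -> (k * d <= x < k.+1 * d)%N -> (x %/ d = k)%N.
Proof.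
move=> d0 /andP[h1 h2]; apply/eqP; rewrite eqn_leq; apply/andP; split.
  by rewrite -ltnS ltn_divLR.
by rewrite leq_divRL.
Qed.

Lemma good_lq (R : realFieldType) (beta : nat -> R) n l M I q : (0 < l)%N ->
  good (fun i => betaz beta (n - l + i)%N) l M I -> q = M%:R / (l * l.+1)%:R ->
  lqset beta n l q I.
Proof.
move=> l0 [g1 g2 g3] ->.
have L0 : 0 < (l * l.+1)%:R :> R by rewrite ltr0n muln_gt0; lia.
split => //.
  rewrite addn1 -g2 -mul2n natrM; apply: eqle; field.
  by rewrite nzS /= pnatr_eq0; lia.
change (sig (fun i => betaz beta (n - l + i)%N) I <=
    M%:R / (l * l.+1)%:R * Pc (fun i => betaz beta (n - l + i)%N) l).
by rewrite mulrAC ler_pdivlMr // mulrC.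
Qed.

Lemma part5 (R : realFieldType) (beta : nat -> R) n l d : (l < n)%N ->
  exists I : seq nat,
      [/\ lset l I, size I = (2 * d)%N, (l * d <= sumn I)%N
        & sigmaI beta n l I
            <= (2 * d)%:R * tsum beta n l.+1 / (l + 1)%:R].
Proof.
move=> ln.
pose e := fun j => betaz beta (n - l.+1 + j)%N.
pose s := [seq ((1 : R), [:: i.-1; (l.+1 - i)%N]) | i <- index_iota 1 l.+2].
have w0 : forall t, t \in s -> 0 <= t.1 by move=> t /mapP[i _ ->].
have Ws : \sum_(t <- s) t.1 = l.+1%:R.
  by rewrite big_map sumr_const_nat subSS subn0.
have Wp : 0 < \sum_(t <- s) t.1 by rewrite Ws ltr0n.
have Hv : \sum_(t <- s) t.1 * sigmaI beta n l t.2 = 2 * Pc e l.+1.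
  rewrite big_map /=.
  have P0 : Pc e 0 = 0 by rewrite /Pc big_geq.
  have -> : 2 * Pc e l.+1 = 2 * (Pc e l.+1 - Pc e 0) by rewrite P0 subr0.
  rewrite -(pairsum e (l := l.+1) (a := 1)) //.
  apply: eq_big_nat => i /andP[i1 il].
  rewrite mul1r /sigmaI !big_cons big_nil addr0 /e; congr (betaz _ _ + betaz _ _); lia.
have Hle : \sum_(t <- s) t.1 * sigmaI beta n l t.2 <=
    (\sum_(t <- s) t.1) * (2 * Pc e l.+1 / l.+1%:R).
  by rewrite Hv Ws; apply: eqle; field; rewrite nzS.
have [t [ts _ tle]] := avg_min w0 Wp Hle.
case/mapP: ts tle => i; rewrite mem_index_iota => ir -> /= tle.
exists (rep d [:: i.-1; (l.+1 - i)%N]); split.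
- elim: d {tle} => [|d IH] //=; rewrite -/(rep d _) IH andbT; apply/andP; split; lia.
- by rewrite size_rep mulnC.
- have -> : sumn (rep d [:: i.-1; (l.+1 - i)%N]) = (d * l)%N.
    elim: d {tle} => [|d IH] //=; rewrite -/(rep d _) IH; lia.
  by rewrite mulnC.
- change (sig (fun i => betaz beta (n - l + i)%N) (rep d [:: i.-1; (l.+1 - i)%N]) <=
     (2 * d)%:R * Pc e l.+1 / (l + 1)%:R).
  rewrite sig_rep addn1.
  have -> : (2 * d)%:R * Pc e l.+1 / l.+1%:R = d%:R * (2 * Pc e l.+1 / l.+1%:R) :> R.
    by rewrite natrM; field; rewrite nzS.
  by apply: ler_wpM2l.
Qed.

Lemma dwin l h : (0 < l)%N -> (h <= l)%N ->
  [/\ (h = 0 -> (2 * h) %/ l.+1 = 0 /\ (2 * h + l) %/ l.+1 = 0),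
      (0 < h -> 2 * h < l.+1 -> (2 * h) %/ l.+1 = 0 /\ (2 * h + l) %/ l.+1 = 1),
      (2 * h = l.+1 -> (2 * h) %/ l.+1 = 1 /\ (2 * h + l) %/ l.+1 = 1)
    & (l.+1 < 2 * h -> (2 * h) %/ l.+1 = 1 /\ (2 * h + l) %/ l.+1 = 2)]%N.
Proof.
move=> l0 hl; split => H.
- by split; apply: div_range; lia.
- by move=> H2; split; apply: div_range; lia.
- by split; apply: div_range; lia.
- by split; apply: div_range; lia.
Qed.

Lemma part3g (R : realFieldType) (c : nat -> R) l k h : (0 < l)%N -> (1 <= k)%N -> (h <= l)%N ->
  exists I, good c l (k * (l * l.+1) + 2 * h) I /\
    (k * l + (2 * h) %/ l.+1 <= size I <= k * l + (2 * h + l) %/ l.+1)%N.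
Proof.
move=> l0 k1 hl.
have [D0 D1 D2 D3] := dwin l0 hl.
case: k k1 => // K _.
case: (ltnP l 2) => l2.
  have El : l = 1%N by lia.
  subst l; exists (rep (K.+1 + h) (iota 1 1)); split.
    have -> : (K.+1 * (1 * 2) + 2 * h = (K.+1 + h) * (1 * 2))%N by lia.
    exact: good_rep (goodF c 1).
  rewrite size_rep /=.
  have [->|->] : h = 0%N \/ h = 1%N by lia.
    lia.
  lia.
have [p [gp sp]] := exP c l0.
have gF := goodF c l.
case: (leqP (2 * h) l.+1) => h2.
  have [j [Ej|Ej]] : exists j, l = (2 * j)%N \/ l = (2 * j).+1.
    by exists l./2; move: (odd_double_half l); rewrite -mul2n; case: (odd l) => /= E; [right|left]; lia.
  - case: j Ej => [|J] Ej; first lia.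
    have hl' : (h < l)%N by lia.
    have [I [gI1 gI2 gI3 sI]] := exA c h2 hl'.
    have gI : good c l (2 * (l.+1 + h)) I by split => //; rewrite gI2 -mul2n.
    exists (rep K (iota 1 l) ++ (rep J p ++ I)); split.
      have -> : (K.+1 * (l * l.+1) + 2 * h = K * (l * l.+1) + (J * (2 * l.+1) + 2 * (l.+1 + h)))%N by subst l; nia.
      exact: good_cat (good_rep _ gF) (good_cat (good_rep _ gp) gI).
    rewrite !size_cat !size_rep size_iota sp.
    case: (posnP h) => [h0|hp].
      have [-> ->] := D0 h0; move: sI => /orP[/andP[_ H]|/andP[/eqP -> _]]; [lia | subst l; nia].
    have h3 : (2 * h < l.+1)%N by lia.
    have [-> ->] := D1 hp h3.
    move: sI => /orP[/andP[/eqP -> _] | /andP[/eqP -> _]]; subst l; nia.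
  - case: j Ej => [|J] Ej; first lia.
    have h2' : (2 * (J.+2 - h) <= l.+1)%N by lia.
    have hl' : (J.+2 - h < l)%N by lia.
    have [I [gI sI]] := exC c h2' hl'.
    exists (rep K (iota 1 l) ++ (rep J p ++ I)); split.
      have E1 : (2 * (2 * l.+1 - (J.+2 - h)) = 6 * J + 12 + 2 * h)%N by lia.
      rewrite E1 in gI.
      have -> : (K.+1 * (l * l.+1) + 2 * h = K * (l * l.+1) + (J * (2 * l.+1) + (6 * J + 12 + 2 * h)))%N by subst l; nia.
      exact: good_cat (good_rep _ gF) (good_cat (good_rep _ gp) gI).
    rewrite !size_cat !size_rep size_iota sp.
    case: (posnP h) => [h0|hp].
      have [-> ->] := D0 h0; move: sI => /orP[/andP[/eqP -> _] | /andP[_ H]]; [subst l; nia | lia].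
    case: (ltnP (2 * h) l.+1) => h3.
      have [-> ->] := D1 hp h3.
      move: sI => /orP[/andP[/eqP -> _] | /andP[/eqP -> _]]; subst l; nia.
    have h4 : (2 * h = l.+1)%N by lia.
    have [-> ->] := D2 h4.
    move: sI => /orP[/andP[/eqP -> H] | /andP[/eqP -> _]]; [lia | subst l; nia].
have h2' : (2 * (l.+1 - h) <= l.+1)%N by lia.
have [B [gB sB]] := exB c l0 h2'.
exists (rep K (iota 1 l) ++ (B ++ p)); split.
  have E2 : (l * l.+1 - 2 * (l.+1 - h) + 2 * l.+1 = l * l.+1 + 2 * h)%N.
    have : (2 * (l.+1 - h) <= l * l.+1)%N by nia.
    lia.
  have -> : (K.+1 * (l * l.+1) + 2 * h = K * (l * l.+1) + ((l * l.+1 - 2 * (l.+1 - h)) + 2 * l.+1))%N.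
    by rewrite E2 mulSn; lia.
  exact: good_cat (good_rep _ gF) (good_cat gB gp).
rewrite !size_cat !size_rep size_iota sp.
have [-> ->] := D3 h2; nia.
Qed.

Lemma part4g (R : realFieldType) (c : nat -> R) l d h : (0 < l)%N -> (1 <= d)%N -> (h <= l)%N ->
  exists I, good c l (d * (2 * l.+1) + 2 * h) I /\ (size I <= 2 * d + 2)%N.
Proof.
move=> l0 d1 hl.
case: d d1 => // D _.
case: (ltnP l 2) => l2.
  have El : l = 1%N by lia.
  subst l; exists (rep (2 * D.+1 + h) (iota 1 1)); split.
    have -> : (D.+1 * (2 * 2) + 2 * h = (2 * D.+1 + h) * (1 * 2))%N by lia.
    exact: good_rep (goodF c 1).
  rewrite size_rep /=; lia.
have [p [gp sp]] := exP c l0.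
case: (leqP (2 * h) l.+1) => h2.
  have hl' : (h < l)%N by lia.
  have [I [gI1 gI2 gI3 sI]] := exA c h2 hl'.
  have gI : good c l (2 * (l.+1 + h)) I by split => //; rewrite gI2 -mul2n.
  exists (rep D p ++ I); split.
    have -> : (D.+1 * (2 * l.+1) + 2 * h = D * (2 * l.+1) + 2 * (l.+1 + h))%N by rewrite mulSn; lia.
    exact: good_cat (good_rep _ gp) gI.
  rewrite size_cat size_rep sp.
  by move: sI => /orP[/andP[/eqP -> _] | /andP[/eqP -> _]]; lia.
have h2' : (2 * (l.+1 - h) <= l.+1)%N by lia.
have hl' : (l.+1 - h < l)%N by lia.
have [I [gI sI]] := exC c h2' hl'.
have E1 : (2 * (2 * l.+1 - (l.+1 - h)) = 2 * l.+1 + 2 * h)%N by lia.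
rewrite E1 in gI.
exists (rep D p ++ I); split.
  have -> : (D.+1 * (2 * l.+1) + 2 * h = D * (2 * l.+1) + (2 * l.+1 + 2 * h))%N by rewrite mulSn; lia.
  exact: good_cat (good_rep _ gp) gI.
rewrite size_cat size_rep sp.
by move: sI => /orP[/andP[/eqP -> _] | /andP[/eqP -> _]]; lia.
Qed.

Unset Implicit Arguments. Set Strict Implicit.
Theorem lemma3 (R : realFieldType) (beta : nat -> R) (n l : nat)
  (hb1 : 0 <= beta 1%N)
  (hmono : forall i : nat, (1 <= i)%N -> (i < n)%N -> beta i <= beta i.+1)
  (hl1 : (1 <= l)%N) (hln : (l <= n)%N) :
  [/\
   (* 1 *)
   (forall d : nat, exists I : seq nat,
      lqset beta n l ((2 * d)%:R / l%:R) I /\ size I = (2 * d)%N),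
   (* 2 *)
   (forall h : nat, (2 * h <= l + 1)%N -> exists I : seq nat,
      lqset beta n l (1 - (2 * h)%:R / (l * (l + 1))%:R) I
      /\ (l - 1 <= size I <= l)%N),
   (* 3 *)
   (forall k h : nat, (1 <= k)%N -> (h <= l)%N -> exists I : seq nat,
      lqset beta n l (k%:R + (2 * h)%:R / (l * (l + 1))%:R) I
      /\ (k * l + (2 * h) %/ (l + 1) <= size I
           <= k * l + (2 * h + l) %/ (l + 1))%N),
   (* 4 *)
   (forall d h : nat, (1 <= d)%N -> (h <= l)%N -> exists I : seq nat,
      lqset beta n l ((2 * d)%:R / l%:R + (2 * h)%:R / (l * (l + 1))%:R) I
      /\ (size I <= 2 * d + 2)%N)
  & (* 5 *)
   ((l <= n - 1)%N -> forall d : nat, exists I : seq nat,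
      [/\ lset l I, size I = (2 * d)%N, (l * d <= sumn I)%N
        & sigmaI beta n l I
            <= (2 * d)%:R * tsum beta n l.+1 / (l + 1)%:R])].
Proof.
have l0 : (0 < l)%N := hl1.
pose c := fun i => betaz beta (n - l + i)%N.
have Lnz : l%:R != 0 :> R by rewrite pnatr_eq0; lia.
have L1nz : l.+1%:R != 0 :> R by rewrite pnatr_eq0.
split.
- move=> d; have [p [gp sp]] := exP c l0.
  exists (rep d p); split; last by rewrite size_rep sp mulnC.
  apply: good_lq l0 (good_rep d gp) _.
  by rewrite !natrM; field; rewrite Lnz nzS.
- move=> h; rewrite addn1 => h2; have [I [gI sI]] := exB c l0 h2.
  exists I; split => //; apply: good_lq l0 gI _.
  rewrite natrB; last by nia.
  by rewrite !natrM; field; rewrite Lnz nzS.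
- move=> k h k1 hl; have [I [gI sI]] := part3g c l0 k1 hl.
  exists I; rewrite !addn1; split => //; apply: good_lq l0 gI _.
  by rewrite natrD !natrM; field; rewrite Lnz nzS.
- move=> d h d1 hl; have [I [gI sI]] := part4g c l0 d1 hl.
  exists I; split => //; apply: good_lq l0 gI _.
  by rewrite addn1 natrD !natrM; field; rewrite Lnz nzS.
- move=> ln d; apply: part5; lia.
Qed.
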